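(* Let $\sigma\in S_n$, $\tau\in S_{n+1}$ and $\sigma\prec\tau$. Then $\mathrm{al}(\tau)\le\mathrm{al}(\sigma)+2$ and, for every $k\in\mathbf{N}$, $s_k(\tau)\le s_k(\sigma)+2$.
   Context: $S_n$ is the set of permutations of $[n]$; $\pi\prec\rho$ means $\rho$ has a subsequence order-isomorphic to $\pi$. For a permutation $\pi$ of length $n$ and $A\subset[n]$, $\pi|A$ is the permutation order-isomorphic to the subsequence of $\pi$ at positions in $A$. A permutation $\sigma$ is alternating if $\sigma(\{1,3,5,\dots\})>\sigma(\{2,4,6,\dots\})$. $\mathrm{al}(\pi)$ is the maximum length of an alternating permutation $\rho$ with $\rho\prec\pi$ or $\rho\prec\pi^{-1}$. For $\sigma\in S_n,\tau\in S_m$, $\sigma\oplus\tau\in S_{n+m}$ equals $\sigma(i)$ at $i\le n$ and $n+\tau(i-n)$ at $i>n$; $\sigma\ominus\tau$ equals $m+\sigma(i)$ at $i\le n$ and $\tau(i-n)$ at $i>n$. Up-(down-)indecomposable means not of the form $\sigma\oplus\tau$ ($\sigma\ominus\tau$) with both nonempty; $h^+(\pi)$ ($h^-(\pi)$) is the maximum length of a block in the unique decomposition of $\pi$ as a $\oplus$-sum of up-indecomposables ($\ominus$-sum of down-indecomposables). $H_k^\pm=\{\pi:h^\pm(\pi)<k\}$. For $k\ge2$ and $\pi\in S_n$, $s_k(\pi)$ is the number $r$ of intervals in the greedy partition $I_1<\dots<I_r$ of $[n]$ where $I_1$ is the longest initial interval with $\pi|I_1\in H_k^+\cup H_k^-$,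 $I_2$ the longest following interval with $\pi|I_2\in H_k^+\cup H_k^-$, etc. By convention $s_1(\pi)=\infty$ for all $\pi$. *)

(* Defs.v *)
(* Permutations of [n] are 'S_n (permutations of 'I_n = {0..n-1}). *)
From mathcomp Require Import all_boot all_fingroup.
From Stdlib Require Import ClassicalEpsilon.

Set Implicit Arguments.
Unset Strict Implicit.
Unset Printing Implicit Defensive.

Definition contains (m n : nat) (rho : 'S_m) (pi : 'S_n) : bool :=
  [exists f : {ffun 'I_m -> 'I_n},
    [forall i : 'I_m, forall j : 'I_m, (i < j) ==> (f i < f j)] &&
    [forall i : 'I_m, forall j : 'I_m, (rho i < rho j) == (pi (f i) < pi (f j))]].

(* alternating: values at odd (1-based) positions exceed values at even
   (1-based) positions; with 0-based indices: even index i, odd index j. *)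
Definition alternating (n : nat) (rho : 'S_n) : bool :=
  [forall i : 'I_n, forall j : 'I_n, (~~ odd i && odd j) ==> (rho j < rho i)].

Definition al (n : nat) (pi : 'S_n) : nat :=
  \max_(m < n.+1 | [exists rho : 'S_m,
                     alternating rho && (contains rho pi || contains rho pi^-1)]) m.

Definition word (n : nat) (pi : 'S_n) : seq nat := [seq (pi i : nat) | i <- enum 'I_n].

(* s is order-isomorphic to sigma (+) tau with |sigma| = i *)
Definition plus_split (s : seq nat) (i : nat) : bool :=
  allrel (fun x y => x < y) (take i s) (drop i s).
(* s is order-isomorphic to sigma (-) tau with |sigma| = i *)
Definition minus_split (s : seq nat) (i : nat) : bool :=
  allrel (fun x y => y < x) (take i s) (drop i s).

Definition up_indec (s : seq nat) : bool :=
  ~~ [exists i : 'I_(size s), (0 < i) && plus_split s i].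
Definition down_indec (s : seq nat) : bool :=
  ~~ [exists i : 'I_(size s), (0 < i) && minus_split s i].

Definition plus_decomp (s : seq nat) (bs : seq (seq nat)) : Prop :=
  [/\ flatten bs = s, all (fun b => b != [::]) bs, all up_indec bs
    & pairwise (fun b c => allrel (fun x y => x < y) b c) bs].
Definition minus_decomp (s : seq nat) (bs : seq (seq nat)) : Prop :=
  [/\ flatten bs = s, all (fun b => b != [::]) bs, all down_indec bs
    & pairwise (fun b c => allrel (fun x y => y < x) b c) bs].

(* h^+(s) = h : the maximum block length in the (unique) decomposition *)
Definition hplus_is (s : seq nat) (h : nat) : Prop :=
  exists bs, plus_decomp s bs /\ h = \max_(b <- bs) size b.
Definition hminus_is (s : seq nat) (h : nat) : Prop :=
  exists bs, minus_decomp s bs /\ h = \max_(b <- bs) size b.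

Definition in_Hplus (k : nat) (s : seq nat) : Prop := exists h, hplus_is s h /\ h < k.
Definition in_Hminus (k : nat) (s : seq nat) : Prop := exists h, hminus_is s h /\ h < k.
Definition in_H (k : nat) (s : seq nat) : Prop := in_Hplus k s \/ in_Hminus k s.

Definition pdec (P : Prop) : bool := if excluded_middle_informative P then true else false.

Definition first_len (k : nat) (s : seq nat) : nat :=
  \max_(i < (size s).+1 | pdec (in_H k (take i s))) i.

(* greedy partition count (fuel = size s suffices, each step removes >= 1 entry) *)
Fixpoint greedy_count (fuel k : nat) (s : seq nat) : nat :=
  match fuel with
  | 0 => 0
  | f.+1 => if s is [::] then 0
            else (greedy_count f k (drop (maxn 1 (first_len k s)) s)).+1
  end.

(* s_k(pi), for k >= 2 *)
Definition s_k (k n : nat) (pi : 'S_n) : nat := greedy_count n k (word pi).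

(* Main.v *)
Require Import Defs.
From mathcomp Require Import all_boot all_fingroup.
From mathcomp Require Import zify.
From Stdlib Require Import ClassicalEpsilon.
Ltac nlia := repeat match goal with
  | |- context [@size (Equality.sort ?T) ?x] => change (@size (Equality.sort T) x) with (@size nat x)
  | H : context [@size (Equality.sort ?T) ?x] |- _ => change (@size (Equality.sort T) x) with (@size nat x) in H
  end; lia.
Set Implicit Arguments.
Unset Strict Implicit.
Unset Printing Implicit Defensive.

Definition spl (r : rel nat) (s : seq nat) i := allrel r (take i s) (drop i s).
Definition indec r (s : seq nat) := ~~ [exists i : 'I_(size s), (0 < i) && spl r s i].
Definition decomp r (s : seq nat) bs :=
  [/\ flatten bs = s, all (fun b => b != [::]) bs, all (indec r) bs
    & pairwise (fun b c => allrel r b c) bs].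
Definition Dk r k s := exists bs, decomp r s bs /\ \max_(b <- bs) size b < k.
Definition Q r k (s : seq nat) := forall p t q, s = p ++ t ++ q -> k <= size t -> ~~ indec r t.

Lemma indecP r s : reflect (exists i, 0 < i < size s /\ spl r s i) (~~ indec r s).
Proof.
rewrite /indec negbK; apply: (iffP existsP).
  by move=> [i /andP[i0 h]]; exists (val i); rewrite i0 ltn_ord.
by move=> [i [/andP[i0 ilt] h]]; exists (Ordinal ilt); rewrite /= i0.
Qed.

Lemma mem_flat (T : eqType) (x : T) (b : seq T) (bs : seq (seq T)) : x \in b -> b \in bs -> x \in flatten bs.
Proof. by move=> xb bbs; apply/flattenP; exists b. Qed.

Lemma D_Q_gen r k bs : 0 < k -> (forall b, b \in bs -> size b < k) ->
  pairwise (fun b c => allrel r b c) bs ->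
  forall p t q, flatten bs = p ++ t ++ q -> k <= size t -> ~~ indec r t.
Proof.
move=> k0; elim: bs => [|b bs IH] Hsz Hpw p t q /=.
  move=> E Hk; have := congr1 size E; rewrite !size_cat /=; lia.
move: Hpw; rewrite /= => /andP[Hb Hpw] E Hk.
have Hbk : size b < k by apply: Hsz; rewrite mem_head.
case: (leqP (size b) (size p)) => Hbp.
  have Eb : b = take (size b) p.
    by have := congr1 (take (size b)) E; rewrite take_size_cat // take_cat ltn_neqAle Hbp andbT; case: eqP => [->|]; rewrite ?take_size ?subnn ?take0 ?cats0.
  have Ed : flatten bs = drop (size b) p ++ t ++ q.
    by have := congr1 (drop (size b)) E; rewrite drop_size_cat // drop_cat ltn_neqAle Hbp andbT; case: eqP => [->|]; rewrite ?drop_size ?subnn ?drop0.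
  apply: (IH _ Hpw _ _ _ Ed Hk) => c cin; apply: Hsz; by rewrite inE cin orbT.
set j := size b - size p.
have E2 : drop (size p) b ++ flatten bs = t ++ q.
  by have := congr1 (drop (size p)) E; rewrite drop_cat Hbp drop_size_cat.
have szd : size (drop (size p) b) = j by rewrite size_drop.
case: (leqP (size t) j) => Htj.
  have : size t < k by apply: leq_ltn_trans Htj _; rewrite /j; apply: leq_ltn_trans (leq_subr _ _) Hbk.
  by rewrite ltnNge Hk.
have Et1 : take j t = drop (size p) b.
  by have := congr1 (take j) E2; rewrite -szd take_size_cat // szd take_cat Htj.
have Et2 : drop j t ++ q = flatten bs.
  by have := congr1 (drop j) E2; rewrite -szd drop_size_cat // szd drop_cat Htj.
apply/indecP; exists j; split.
  by rewrite Htj andbT /j subn_gt0.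
apply/allrelP => x y; rewrite Et1 => /mem_drop xb yt.
have yf : y \in flatten bs by rewrite -Et2 mem_cat yt.
move/flattenP: yf => [c cin yc].
by move/allP: Hb => /(_ c cin) /allrelP; apply.
Qed.

Lemma D_Q r k s : Dk r k s -> Q r k s.
Proof.
move=> [bs [[fl _ _ pw] mx]] p t q E.
have k0 : 0 < k by move: mx; case: k.
have E' : flatten bs = p ++ t ++ q by rewrite fl.
apply: (D_Q_gen k0 _ pw E').
move=> b bin; apply: leq_ltn_trans mx.
by apply: (@leq_bigmax_seq _ bs xpredT (fun c : seq nat => size c) b bin).
Qed.

Lemma decomp_ex r s : exists bs, decomp r s bs.
Proof.
have [N] := ubnP (size s); elim: N s => // N IH s Hs.
case: s Hs => [|x s'] Hs; first by exists [::]; split.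
case: (boolP (indec r (x :: s'))) => H.
  by exists [:: x :: s']; split; rewrite //= ?cats0 ?H.
move/indecP: H => [i [/andP[i0 ilt] sp]].
have h1 : size (take i (x :: s')) < N by rewrite size_take ilt; lia.
have h2 : size (drop i (x :: s')) < N by rewrite size_drop; lia.
have [bsa [fa na ia pa]] := IH (take i (x :: s')) h1.
have [bsb [fb nb ib pb]] := IH (drop i (x :: s')) h2.
exists (bsa ++ bsb); split.
- by rewrite flatten_cat fa fb cat_take_drop.
- by rewrite all_cat na nb.
- by rewrite all_cat ia ib.
rewrite pairwise_cat; apply/and3P; split => //.
apply/allrelP => b c bin cin; apply/allrelP => y z yb zc.
move/allrelP: sp; apply.
  by rewrite -fa; apply: mem_flat bin.
by rewrite -fb; apply: mem_flat cin.
Qed.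

Lemma in_flat_infix (b : seq nat) bs : b \in bs -> exists p q, flatten bs = p ++ b ++ q.
Proof.
case/splitPr => bs1 bs2; exists (flatten bs1), (flatten bs2).
by rewrite flatten_cat /=.
Qed.

Lemma Q_D r k s : 0 < k -> Q r k s -> Dk r k s.
Proof.
move=> k0 HQ; have [bs [fl ne id pw]] := decomp_ex r s.
exists bs; split => //.
have : \max_(b <- bs) size b <= k.-1.
  apply/bigmax_leqP_seq => b bin _.
  have [p [q E]] := in_flat_infix bin.
  case: (leqP k (size b)) => hb; last by rewrite -ltnS prednK.
  have := HQ p b q; rewrite -fl E => /(_ erefl hb).
  by move/allP: id => /(_ b bin) ->.
by rewrite -ltnS prednK.
Qed.

Definition rlt := fun x y : nat => x < y.
Definition rgt := fun x y : nat => y < x.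
Definition PP k s := Q rlt k s \/ Q rgt k s.

Lemma inH_PP k s : 0 < k -> in_H k s <-> PP k s.
Proof.
move=> k0.
have E : forall r (H : seq nat -> nat -> Prop),
   (H = fun s h => exists bs, decomp r s bs /\ h = \max_(b <- bs) size b) ->
   (exists h, H s h /\ h < k) <-> Q r k s.
  move=> r H ->; split.
    by move=> [h [[bs [d ->]] hk]]; apply: D_Q; exists bs.
  move=> /(Q_D k0) [bs [d hk]]; exists (\max_(b <- bs) size b); split => //; by exists bs.
rewrite /in_H /PP /in_Hplus /in_Hminus.
rewrite (E rlt hplus_is) // (E rgt hminus_is) //.
Qed.

Lemma Q_infix r k p t q : Q r k (p ++ t ++ q) -> Q r k t.
Proof.
move=> H p' t' q' E; apply: (H (p ++ p') t' (q' ++ q)).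
by rewrite E -!catA.
Qed.

Lemma spl_map (T : Type) r (F : T -> nat) t j :
  spl r (map F t) j = allrel (fun x y => r (F x) (F y)) (take j t) (drop j t).
Proof. by rewrite /spl -map_take -map_drop allrel_mapl allrel_mapr. Qed.

Lemma Q_map (T : Type) r k (F1 F2 : T -> nat) (I : seq T) :
  (forall i j, r (F1 i) (F1 j) = r (F2 i) (F2 j)) ->
  Q r k (map F1 I) -> Q r k (map F2 I).
Proof.
move=> H HQ p t q E Hk.
set t' := take (size t) (drop (size p) I).
have Et : t = map F2 t'.
  have := congr1 (take (size t) \o drop (size p)) E.
  by rewrite /= drop_size_cat // take_size_cat // /t' map_take map_drop => ->.
have EI : I = take (size p) I ++ t' ++ drop (size t) (drop (size p) I).
  by rewrite /t' !cat_take_drop.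
have szt : size t' = size t by rewrite Et size_map.
have := HQ (map F1 (take (size p) I)) (map F1 t') (map F1 (drop (size t) (drop (size p) I))).
rewrite {1}EI !map_cat size_map szt => /(_ erefl Hk) /indecP [j [jl sp]].
apply/indecP; exists j; split; first by move: jl; rewrite Et !size_map.
rewrite Et spl_map; move: sp; rewrite spl_map.
by rewrite (@eq_allrel _ _ _ (fun x y => r (F2 x) (F2 y))).
Qed.

Lemma PP_infix k p t q : PP k (p ++ t ++ q) -> PP k t.
Proof. by case=> H; [left|right]; apply: Q_infix H. Qed.

Lemma PP_small k s : size s < k -> PP k s.
Proof.
move=> hs; left => p t q E hk; exfalso.
have := congr1 size E; rewrite !size_cat; lia.
Qed.

Lemma PP_map k (T : Type) (F1 F2 : T -> nat) (I : seq T) :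
  (forall i j, (F1 i < F1 j) = (F2 i < F2 j)) ->
  PP k (map F1 I) -> PP k (map F2 I).
Proof.
move=> H; case=> HQ; [left|right]; apply: Q_map HQ => i j; by rewrite /rgt /rlt H.
Qed.

Lemma pdecT (P : Prop) : P -> pdec P = true.
Proof. by rewrite /pdec; case: excluded_middle_informative. Qed.
Lemma pdecE (P : Prop) : pdec P = true -> P.
Proof. by rewrite /pdec; case: excluded_middle_informative. Qed.

Section Greedy.
Variable k : nat.
Hypothesis hk : 1 < k.
Implicit Types (s t : seq nat) (parts : seq (seq nat)).

Lemma fl_ge s i : i <= size s -> PP k (take i s) -> i <= first_len k s.
Proof.
move=> hi HP; rewrite /first_len.
have hi' : i < (size s).+1 by [].
have := @leq_bigmax_cond _ (fun j : 'I_(size s).+1 => pdec (in_H k (take j s))) (fun j => val j) (Ordinal hi').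
apply; apply: pdecT; exact/(inH_PP _ (ltnW hk)).
Qed.

Lemma fl_le s : first_len k s <= size s.
Proof. by apply/bigmax_leqP => i _; rewrite -ltnS. Qed.

Lemma fl_P s : PP k (take (first_len k s) s).
Proof.
rewrite /first_len.
have [|i0 Hi0 ->] := @eq_bigmax_cond _ (fun j : 'I_(size s).+1 => pdec (in_H k (take j s))) (fun j => val j).
  apply/card_gt0P; exists ord0; rewrite unfold_in /=; apply: pdecT; apply/(inH_PP _ (ltnW hk)).
  by rewrite take0; apply: PP_small => /=; nlia.
apply/(inH_PP _ (ltnW hk)).
by apply: pdecE; move: Hi0; rewrite unfold_in.
Qed.

Definition Lg s := maxn 1 (first_len k s).

Lemma L_P s : PP k (take (Lg s) s).
Proof.
rewrite /Lg; case: (leqP 1 (first_len k s)) => h.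
  by apply: fl_P.
apply: PP_small.
have : size (take 1 s) <= 1 by rewrite size_take; case: ifP => // /negbT; rewrite -leqNgt.
nlia.
Qed.

Lemma L_size s : s != [::] -> 0 < Lg s <= size s.
Proof.
move=> hs; have := fl_le s; rewrite /Lg; case: s hs => //= x s _ h.
apply/andP; split; [lia| rewrite geq_max h andbT //].
Qed.

Lemma fuel_eq f1 f2 s : size s <= f1 -> size s <= f2 ->
  greedy_count f1 k s = greedy_count f2 k s.
Proof.
elim: f1 f2 s => [|f1 IH] [|f2] [|x s] //= h1 h2.
congr S; apply: IH; rewrite size_drop /=; nlia.
Qed.

Definition gc s := greedy_count (size s) k s.

Lemma gc_nil : gc [::] = 0.
Proof. by []. Qed.

Lemma gc_cons s : s != [::] -> gc s = (gc (drop (Lg s) s)).+1.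
Proof.
move=> hs; have /andP[hL1 hL2] := L_size hs; rewrite /gc.
case: s hs hL1 hL2 => //= x s _ hL1 hL2.
congr S; apply: fuel_eq; rewrite size_drop /=; nlia.
Qed.

Lemma gc_drop s i : gc (drop i s) <= gc s.
Proof.
have [N] := ubnP (size s); elim: N s i => // N IH s i Hs.
case: (eqVneq s [::]) => [->|hs]; first by case: i.
have /andP[hL1 hL2] := L_size hs.
have hsz : size (drop (Lg s) s) < N by rewrite size_drop; nlia.
rewrite (gc_cons hs).
case: (leqP (Lg s) i) => h1.
  have -> : drop i s = drop (i - Lg s) (drop (Lg s) s) by rewrite drop_drop subnK.
  by apply: leq_trans (IH _ _ hsz) _.
case: (posnP i) => [->|h0]; first by rewrite drop0 (gc_cons hs).
set t := drop i s.
have ht : t != [::] by rewrite -size_eq0 size_drop -lt0n; nlia.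
rewrite (gc_cons ht) ltnS.
have hLt : Lg s - i <= Lg t.
  apply: leq_trans (leq_maxr 1 (first_len k t)); apply: fl_ge.
    by rewrite size_drop; nlia.
  have HP := L_P s.
  have E : take (Lg s) s = take i s ++ take (Lg s - i) t ++ [::].
    by rewrite cats0 /t -takeD subnKC // ltnW.
  by rewrite E in HP; exact: PP_infix HP.
have -> : drop (Lg t) t = drop (Lg t - (Lg s - i)) (drop (Lg s - i) t) by rewrite drop_drop subnK.
have -> : drop (Lg s - i) t = drop (Lg s) s by rewrite /t drop_drop subnK // ltnW.
exact: IH.
Qed.

Definition allP parts := forall p, p \in parts -> PP k p.

Lemma allP_cons p ps : allP (p :: ps) <-> PP k p /\ allP ps.
Proof.
split; first by move=> H; split; [apply: H; rewrite mem_head | move=> q qin; apply: H; rewrite inE qin orbT].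
by move=> [H1 H2] q; rewrite inE => /orP[/eqP ->|]; [| apply: H2].
Qed.

Lemma allP_cat p1 p2 : allP (p1 ++ p2) <-> allP p1 /\ allP p2.
Proof.
split; first by move=> H; split => q qin; apply: H; rewrite mem_cat qin ?orbT.
by move=> [H1 H2] q; rewrite mem_cat => /orP[]; [apply: H1|apply: H2].
Qed.

Lemma gc_opt parts s : flatten parts = s -> allP parts -> gc s <= size parts.
Proof.
elim: parts s => [|p ps IH] s /=; first by move=> <-.
move=> E /allP_cons [Hp Hps].
case: (eqVneq s [::]) => [->|hs]; first by [].
rewrite (gc_cons hs) ltnS.
have hLp : size p <= Lg s.
  apply: leq_trans (leq_maxr 1 (first_len k s)); apply: fl_ge.
    by rewrite -E size_cat leq_addr.
  by rewrite -E take_size_cat.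
have -> : drop (Lg s) s = drop (Lg s - size p) (flatten ps).
  by move: hLp; rewrite -E => hLp'; rewrite drop_cat ltnNge hLp' /=.
by apply: leq_trans (gc_drop _ _) (IH _ erefl Hps).
Qed.

Lemma gc_part s : exists parts, [/\ flatten parts = s, allP parts & size parts = gc s].
Proof.
have [N] := ubnP (size s); elim: N s => // N IH s Hs.
case: (eqVneq s [::]) => [->|hs]; first by exists [::]; split => // p.
have /andP[hL1 hL2] := L_size hs.
have hsz : size (drop (Lg s) s) < N by rewrite size_drop; nlia.
have [ps [E1 E2 E3]] := IH _ hsz.
exists (take (Lg s) s :: ps); split.
- by rewrite /= E1 cat_take_drop.
- by apply/allP_cons; split => //; apply: L_P.
by rewrite /= E3 (gc_cons hs).
Qed.

Lemma part_split parts x y : flatten parts = x ++ y -> allP parts ->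
  exists p1 p2, [/\ flatten p1 = x, flatten p2 = y, allP p1, allP p2
                  & size p1 + size p2 <= (size parts).+1].
Proof.
elim: parts x => [|p ps IH] x /=.
  move=> E _; move: E; case: x => //; case: y => // _.
  by exists [::], [::]; split => // q.
move=> E /allP_cons [Hp Hps].
case: (leqP (size x) (size p)) => hx.
  have Ep : p = x ++ drop (size x) p.
    have := congr1 (take (size p)) E; rewrite take_size_cat // take_cat ltnNge hx /=.
    by move=> ->; rewrite drop_size_cat.
  exists [:: x], (drop (size x) p :: ps); split => /=.
  - by rewrite cats0.
  - by move: E; rewrite {1}Ep -catA => /(congr1 (drop (size x))); rewrite !drop_size_cat.
  - move=> q; rewrite inE => /eqP ->; move: Hp; rewrite Ep => Hp.
    by apply: (@PP_infix _ [::] _ (drop (size x) p)); rewrite /=.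
  - apply/allP_cons; split => //; move: Hp; rewrite {1}Ep => Hp.
    by apply: (@PP_infix _ x _ [::]); rewrite cats0.
  by rewrite ltnS.
have Ex : x = p ++ drop (size p) x.
  have := congr1 (take (size p)) E; rewrite take_size_cat // take_cat hx => Hp'.
  by rewrite {1}Hp' cat_take_drop.
have E' : flatten ps = drop (size p) x ++ y.
  by have := congr1 (drop (size p)) E; rewrite drop_size_cat // drop_cat hx.
have [p1 [p2 [F1 F2 A1 A2 S]]] := IH _ E' Hps.
exists (p :: p1), p2; split => //=.
- by rewrite F1 -Ex.
- by apply/allP_cons.
Qed.

Lemma gc_insert x a y : gc (x ++ a :: y) <= (gc (x ++ y)).+2.
Proof.
have [parts [E1 E2 E3]] := gc_part (x ++ y).
have [p1 [p2 [F1 F2 A1 A2 S]]] := part_split E1 E2.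
have H : gc (x ++ a :: y) <= size (p1 ++ [:: a] :: p2).
  apply: gc_opt; first by rewrite flatten_cat /= F1 F2.
  apply/allP_cat; split => //; apply/allP_cons; split => //.
  by apply: PP_small => /=; nlia.
apply: leq_trans H _; rewrite size_cat /= -E3; nlia.
Qed.

Lemma flatten_map_lift (T : Type) (F : T -> nat) (I : seq T) parts :
  flatten parts = map F I -> exists parts' : seq (seq T),
    flatten parts' = I /\ parts = map (map F) parts'.
Proof.
elim: parts I => [|p ps IH] I /=.
  by case: I => // _; exists [::].
move=> E.
have Ep : p = map F (take (size p) I).
  by rewrite map_take -E take_size_cat.
have E' : flatten ps = map F (drop (size p) I).
  by rewrite map_drop -E drop_size_cat.
have [ps' [F1 F2]] := IH _ E'.
exists (take (size p) I :: ps'); split; first by rewrite /= F1 cat_take_drop.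
by rewrite /= -Ep F2.
Qed.

Lemma gc_relabel (T : eqType) (F1 F2 : T -> nat) (I : seq T) :
  (forall i j, (F1 i < F1 j) = (F2 i < F2 j)) ->
  gc (map F2 I) <= gc (map F1 I).
Proof.
move=> H.
have [parts [E1 E2 E3]] := gc_part (map F1 I).
have [parts' [G1 G2]] := flatten_map_lift E1.
rewrite -E3; have -> : size parts = size (map (map F2) parts') by rewrite G2 !size_map.
apply: gc_opt.
  by rewrite -G1; elim: parts' {G1 G2} => //= q qs ->; rewrite map_cat.
move=> q /mapP [q' q'in ->].
apply: (PP_map H); apply: E2; rewrite G2; exact: map_f.
Qed.

End Greedy.

Lemma containsP m n (rho : 'S_m) (pi : 'S_n) :
  contains rho pi <-> exists f : 'I_m -> 'I_n,
    (forall i j : 'I_m, i < j -> f i < f j) /\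
    (forall i j : 'I_m, (rho i < rho j) = (pi (f i) < pi (f j))).
Proof.
split.
  case/existsP => f /andP [/forallP H1 /forallP H2]; exists f; split => i j.
    by move: (H1 i) => /forallP /(_ j) /implyP.
  by move: (H2 i) => /forallP /(_ j) /eqP.
move=> [f [H1 H2]]; apply/existsP; exists (finfun f); apply/andP; split;
  apply/forallP => i; apply/forallP => j; rewrite !ffunE.
  by apply/implyP; exact: H1.
exact/eqP.
Qed.

Lemma inc_lt m n (f : 'I_m -> 'I_n) : (forall i j : 'I_m, i < j -> f i < f j) ->
  forall i j, (f i < f j) = (i < j).
Proof.
move=> H i j; case: (ltngtP i j) => h.
- by rewrite H.
- by apply/negbTE; rewrite -leqNgt ltnW // H.
- by rewrite (val_inj h) ltnn.
Qed.

Lemma inc_inj m n (f : 'I_m -> 'I_n) : (forall i j : 'I_m, i < j -> f i < f j) -> injective f.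
Proof.
move=> H i j E; apply/eqP; case: (ltngtP i j) => h.
- by have := H _ _ h; rewrite E ltnn.
- by have := H _ _ h; rewrite E ltnn.
- exact/eqP/val_inj.
Qed.

Lemma contains_inv m n (s : 'S_m) (t : 'S_n) : contains s t -> contains (s^-1)%g (t^-1)%g.
Proof.
case/containsP => g [Hg1 Hg2]; apply/containsP.
exists (fun y => t (g ((s^-1)%g y))); split.
  move=> y1 y2 h; rewrite -Hg2 !permKV //.
move=> y1 y2; rewrite !permK.
by rewrite (inc_lt Hg1).
Qed.

Lemma std m (v : 'I_m -> nat) : injective v ->
  exists r : 'S_m, forall i j, (r i < r j) = (v i < v j).
Proof.
move=> vinj.
have rk_lt : forall i, #|[pred j | v j < v i]| < m.
  move=> i; have E := cardC [pred j | v j < v i]; rewrite card_ord in E.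
  rewrite -[X in _ < X]E -[X in X < _]addn0 ltn_add2l; apply/card_gt0P; exists i.
  by rewrite !inE /= ltnn.
have mono : forall i j, v i < v j -> #|[pred x | v x < v i]| < #|[pred x | v x < v j]|.
  move=> i j h; apply: proper_card; apply/properP; split.
    by apply/subsetP => x; rewrite !inE /= => hx; apply: ltn_trans hx h.
  by exists i; rewrite !inE /= ?h ?ltnn.
pose rk i := Ordinal (rk_lt i).
have rkinj : injective rk.
  move=> i j /(congr1 val) /= E; apply: vinj; apply/eqP.
  case: (ltngtP (v i) (v j)) => h //.
    by have := mono _ _ h; rewrite E ltnn.
  by have := mono _ _ h; rewrite E ltnn.
exists (perm rkinj) => i j; rewrite !permE /=.
case: (ltngtP (v i) (v j)) => h.
- exact: mono.
- by apply/negbTE; rewrite -leqNgt ltnW // mono.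
- by rewrite (vinj _ _ h) ltnn.
Qed.

Lemma codomC_le1 n (g : 'I_n -> 'I_n.+1) : injective g ->
  forall x y, x \notin codom g -> y \notin codom g -> x = y.
Proof.
move=> ginj x y hx hy.
have : #|[predC (codom g)]| <= 1.
  have := cardC (mem (codom g)); rewrite card_codom // !card_ord => H.
  change (n + #|[predC codom g]| = n.+1) in H; lia.
move/card_le1_eqP; apply; by rewrite inE.
Qed.

Lemma al_step n m (sigma : 'S_n.+1) (tau : 'S_n.+2) (rho : 'S_m) :
  contains sigma tau -> contains rho tau -> alternating rho -> 2 <= m ->
  exists rho' : 'S_(m - 2), alternating rho' && contains rho' sigma.
Proof.
case/containsP => g [Hg1 Hg2]; case/containsP => f [Hf1 Hf2] alt hm.
have ginj := inc_inj Hg1; have finj := inc_inj Hf1.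
have [q Hq] : exists q : nat, forall j : 'I_m, (j : nat) != q -> f j \in codom g.
  case: (pickP (fun j => f j \notin codom g)) => [j0 Hj0 | H0].
    exists j0 => j hj; apply/negPn/negP => hfj.
    by move: hj; rewrite (finj _ _ (codomC_le1 ginj hfj Hj0)) eqxx.
  by exists 0 => j _; move: (H0 j) => /= /negbFE.
pose p := minn q (m - 2).
pose hn (i : nat) := if i < p then i else i.+2.
have hlt : forall i : 'I_(m - 2), hn i < m.
  move=> i; have := ltn_ord i; rewrite /hn; case: ifP => _; lia.
pose hh (i : 'I_(m - 2)) : 'I_m := Ordinal (hlt i).
have hhinc : forall i j : 'I_(m - 2), i < j -> hh i < hh j.
  move=> i j h; rewrite /= /hn; case: ifP; case: ifP => //; lia.
have hhodd : forall i : 'I_(m - 2), odd (hh i) = odd i.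
  move=> i; rewrite /= /hn; case: ifP => _ //=; by rewrite negbK.
have hhq : forall i : 'I_(m - 2), (hh i : nat) != q.
  move=> i; have := ltn_ord i; rewrite /= /hn /p; case: ifP => h1 h2; apply/eqP; lia.
pose e (i : 'I_(m - 2)) := odflt ord0 [pick y | g y == f (hh i)].
have He : forall i, g (e i) = f (hh i).
  move=> i; rewrite /e; case: pickP => [y /eqP //| H].
  have := Hq _ (hhq i); case/codomP => y hy.
  by move: (H y); rewrite hy eqxx.
pose v (i : 'I_(m - 2)) := (rho (hh i) : nat).
have vinj : injective v.
  move=> i j /val_inj /perm_inj E; apply: (inc_inj hhinc); exact: E.
have [r Hr] := std vinj.
exists r; apply/andP; split.
  apply/forallP => i; apply/forallP => j; apply/implyP => /andP [hi hj].
  rewrite Hr /v.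
  move: alt => /forallP /(_ (hh i)) /forallP /(_ (hh j)) /implyP; apply.
  by rewrite !hhodd hi hj.
apply/containsP; exists e; split.
  move=> i j h; rewrite -(inc_lt Hg1) !He; exact: Hf1 (hhinc _ _ h).
move=> i j; rewrite Hr /v Hf2 -!He -Hg2 //.
Qed.

Lemma split_enum n (g : 'I_n -> 'I_n.+1) : (forall i j : 'I_n, i < j -> g i < g j) ->
  exists X e Y, enum 'I_n.+1 = X ++ e :: Y /\ map g (enum 'I_n) = X ++ Y.
Proof.
move=> Hg; have ginj := inc_inj Hg.
have [e He] : exists e, e \notin codom g.
  case: (pickP (fun x => x \notin codom g)) => [e He | H]; first by exists e.
  exfalso; have := cardC (mem (codom g)); rewrite card_codom // !card_ord.
  rewrite (eq_card0 (A := [predC (mem (codom g))])); first lia.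
  by move=> x; rewrite !inE; move: (H x).
have Ee : e \in enum 'I_n.+1 by rewrite mem_enum.
have [X [Y EE]] : exists X Y, enum 'I_n.+1 = X ++ e :: Y.
  by case/splitPr: Ee => X Y; exists X, Y.
exists X, e, Y; split => //.
have ltr_tr : transitive (fun a b : 'I_n.+1 => a < b) by move=> ? ? ? ; apply: ltn_trans.
have sortE : forall N, sorted (fun a b : 'I_N => a < b) (enum 'I_N).
  by move=> N; have := iota_ltn_sorted 0 N; rewrite -val_enum_ord sorted_map.
have Hu := enum_uniq 'I_n.+1; rewrite EE cat_uniq /= in Hu.
case/and4P: Hu => _ Hu1 Hu2 _.
apply: (irr_sorted_eq ltr_tr (fun a => ltnn a)).
- rewrite sorted_map; apply: sub_sorted (sortE n) => a b /=; exact: Hg.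
- apply: (subseq_sorted ltr_tr (s2 := X ++ e :: Y)).
    by apply: cat_subseq => //; apply: subseq_cons.
  by rewrite -EE sortE.
move=> x; rewrite -codomE mem_cat.
case: (eqVneq x e) => [->|hxe].
  rewrite (negbTE He); apply/esym/negbTE; rewrite negb_or.
  by move: Hu1; rewrite negb_or => /andP[-> _]; rewrite Hu2.
have : x \in enum 'I_n.+1 by rewrite mem_enum.
rewrite EE mem_cat inE (negbTE hxe) /= => ->.
apply/negPn/negP => hx; move: hxe; by rewrite (codomC_le1 ginj hx He) eqxx.
Qed.

Theorem mainTheorem5 (n : nat) (sigma : 'S_n) (tau : 'S_n.+1) :
  contains sigma tau ->
  al tau <= al sigma + 2 /\
  (forall k : nat, 2 <= k -> s_k k tau <= s_k k sigma + 2).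
Proof.
move=> C; split.
  case: n sigma tau C => [|n] sigma tau C.
    by apply/bigmax_leqP => i _; have := ltn_ord i; lia.
  apply/bigmax_leqP => m /existsP [rho /andP [alt Hc]].
  case: (leqP m 2) => hm2; first by lia.
  have [rho' /andP [alt' Hc']] : exists rho' : 'S_(m - 2),
      alternating rho' && (contains rho' sigma || contains rho' (sigma^-1)%g).
    case/orP: Hc => Hc.
      have [rho' /andP [a b]] := al_step C Hc alt (ltnW hm2).
      by exists rho'; rewrite a b.
    have [rho' /andP [a b]] := al_step (contains_inv C) Hc alt (ltnW hm2).
    by exists rho'; rewrite a b orbT.
  have hm : m - 2 < n.+2 by have := ltn_ord m; lia.
  have := @leq_bigmax_cond _ (fun i : 'I_n.+2 => [exists rho : 'S_i,
                     alternating rho && (contains rho sigma || contains rho (sigma^-1)%g)])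
     (fun i => val i) (Ordinal hm).
  rewrite /al /=.
  have -> : [exists rho0 : 'S_(m - 2), alternating rho0 && (contains rho0 sigma || contains rho0 (sigma^-1)%g)] = true.
    by apply/existsP; exists rho'; rewrite alt'.
  move=> /(_ erefl) H; lia.
move=> k hk.
case/containsP: C => g [Hg1 Hg2].
have [X [e [Y [EE EM]]]] := split_enum Hg1.
have szw : forall N (pi : 'S_N), size (word pi) = N by move=> N pi; rewrite size_map size_enum_ord.
have E1 : s_k k tau = gc k (word tau) by rewrite /s_k /gc szw.
have E2 : s_k k sigma = gc k (word sigma) by rewrite /s_k /gc szw.
rewrite E1 E2.
rewrite /word EE map_cat /= addn2.
apply: leq_trans (gc_insert hk _ _ _) _; rewrite ltnS ltnS -map_cat -EM -map_comp.
exact: gc_relabel.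
Qed.
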